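(* There exist an open set $U\subseteq 2^\omega$ and a closed set $C\subseteq 2^\omega$ such that $\Phi(U)=\Phi(C)$ and this set is a complete $\boldsymbol{\Pi}^0_3$ set.
   Context: $2^\omega$ is the Cantor space with the product topology; for a finite binary sequence $s$, $N_s=\{x\in 2^\omega: s\subset x\}$. $\mu$ is the coin-tossing (Lebesgue) measure on $2^\omega$, i.e. the Borel probability measure with $\mu(N_s)=2^{-\mathrm{lh}(s)}$. For a $\mu$-measurable $A\subseteq 2^\omega$, $\Phi(A)=\{x\in 2^\omega: \lim_{n\to\infty}\mu(A\cap N_{x\restriction n})/\mu(N_{x\restriction n})=1\}$ (the set of points of density $1$ in $A$). $\boldsymbol{\Pi}^0_3$ denotes the class of $F_{\sigma\delta}$ sets, $\boldsymbol{\Sigma}^0_3$ the class of $G_{\delta\sigma}$ sets, $\boldsymbol{\Delta}^0_3=\boldsymbol{\Sigma}^0_3\cap\boldsymbol{\Pi}^0_3$. A set $X\subseteq 2^\omega$ is complete $\boldsymbol{\Pi}^0_3$ if $X\in\boldsymbol{\Pi}^0_3$ and every $\boldsymbol{\Pi}^0_3$ subset of $2^\omega$ is of the form $f^{-1}(X)$ for a continuous $f:2^\omega\to2^\omega$ (equivalently, $X\in\boldsymbol{\Pi}^0_3\setminus\boldsymbol{\Sigma}^0_3$). *)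

(* Defs.v *)
From Stdlib Require Import Reals List ClassicalEpsilon.
Open Scope R_scope.

Definition cantor := nat -> bool.
Definition cset := cantor -> Prop.

Definition N (s : list bool) : cset :=
  fun x => forall i, (i < length s)%nat -> x i = nth i s false.

Definition restr (x : cantor) (n : nat) : list bool := map x (seq 0 n).

Definition cinter (A B : cset) : cset := fun x => A x /\ B x.
Definition ccompl (A : cset) : cset := fun x => ~ A x.

Definition is_open (U : cset) : Prop :=
  forall x, U x -> exists n, forall y, N (restr x n) y -> U y.
Definition is_closed (C : cset) : Prop := is_open (ccompl C).

(* Coin-tossing measure, realized as the Lebesgue outer measure:
   mu*(A) = inf { sum_i 2^{-lh(c_i)} : A subset of U_i N_{c_i} }.
   It coincides with mu on Borel (in particular open/closed) sets. *)
Definition cover_val (A : cset) (r : R) : Prop :=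
  exists c : nat -> list bool,
    (forall x, A x -> exists i, N (c i) x) /\
    (forall n, sum_f_R0 (fun i => (/2) ^ (length (c i))) n <= r).

Definition is_inf (S : R -> Prop) (m : R) : Prop :=
  (forall r, S r -> m <= r) /\ (forall m', (forall r, S r -> m' <= r) -> m' <= m).

Definition mu (A : cset) : R :=
  epsilon (inhabits 0) (fun m => is_inf (cover_val A) m).

(* Points of density 1: mu(A cap N_{x|n}) / mu(N_{x|n}) -> 1,
   with mu(N_{x|n}) = 2^{-n}. *)
Definition Phi (A : cset) : cset :=
  fun x => Un_cv (fun n => mu (cinter A (N (restr x n))) / ((/2) ^ n)) 1.

Definition is_Pi03 (X : cset) : Prop :=
  exists F : nat -> nat -> cset,
    (forall i j, is_closed (F i j)) /\
    (forall x, X x <-> forall i, exists j, F i j x).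

Definition continuous_map (f : cantor -> cantor) : Prop :=
  forall x n, exists m, forall y, N (restr x m) y -> N (restr (f x) n) (f y).

Definition complete_Pi03 (X : cset) : Prop :=
  is_Pi03 X /\
  forall Y : cset, is_Pi03 Y ->
    exists f, continuous_map f /\ (forall x, Y x <-> X (f x)).

(* Main.v *)
Require Import Defs.
From Stdlib Require Import Reals List ClassicalEpsilon.
From Stdlib Require Import Lra Lia Arith Classical Cantor.
Import Defs.
Open Scope R_scope.

Definition pw (n : nat) : R := (/2)^n.

Lemma pw_pos n : 0 < pw n.
Proof. unfold pw. apply pow_lt. lra. Qed.
Lemma pw_S n : pw (S n) = /2 * pw n.
Proof. reflexivity. Qed.
Lemma pw_add a b : pw (a + b) = pw a * pw b.
Proof. unfold pw. apply pow_add. Qed.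
Lemma pw_le a b : (a <= b)%nat -> pw b <= pw a.
Proof.
  intros H. induction H. lra. rewrite pw_S. pose proof (pw_pos m). lra.
Qed.
Lemma pw_0 : pw 0 = 1. Proof. reflexivity. Qed.
Lemma pw_small eps : 0 < eps -> exists K, pw K < eps.
Proof.
  intros He. destruct (pow_lt_1_zero (/2) ltac:(rewrite Rabs_right; lra) eps He) as [K HK].
  exists K. specialize (HK K (le_n _)). unfold pw. rewrite Rabs_right in HK. lra.
  left. apply pow_lt. lra.
Qed.

Lemma restr_length x n : length (restr x n) = n.
Proof. unfold restr. rewrite length_map, length_seq. reflexivity. Qed.
Lemma restr_nth x n i : (i < n)%nat -> nth i (restr x n) false = x i.
Proof.
  intros H. unfold restr.
  rewrite (nth_indep _ false (x 0%nat)) by (rewrite length_map, length_seq; lia).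
  rewrite map_nth, seq_nth by lia. reflexivity.
Qed.
Lemma N_restr w L y : N (restr w L) y <-> forall i, (i < L)%nat -> y i = w i.
Proof.
  unfold N. rewrite restr_length. split; intros H i Hi; rewrite H by lia;
  rewrite restr_nth by lia; reflexivity.
Qed.
Lemma restr_ext x y n : (forall i, (i < n)%nat -> x i = y i) -> restr x n = restr y n.
Proof.
  intros H. unfold restr. apply map_ext_in. intros a Ha. apply in_seq in Ha. apply H. lia.
Qed.

Lemma sum_mono (f : nat -> R) m n : (forall i, 0 <= f i) -> (m <= n)%nat ->
  sum_f_R0 f m <= sum_f_R0 f n.
Proof.
  intros Hf H. induction H. lra. simpl. specialize (Hf (S m0)). lra.
Qed.
Lemma sum_ge_term (f : nat -> R) i n : (forall i, 0 <= f i) -> (i <= n)%nat ->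
  f i <= sum_f_R0 f n.
Proof.
  intros Hf H. induction H.
  - destruct i. simpl; lra. simpl. pose proof (sum_mono f 0 i Hf ltac:(lia)).
    simpl in H. specialize (Hf 0%nat). lra.
  - simpl. specialize (Hf (S m)). lra.
Qed.
Lemma sum_nonneg (f : nat -> R) n : (forall i, 0 <= f i) -> 0 <= sum_f_R0 f n.
Proof. intros Hf. induction n; simpl. apply Hf. specialize (Hf (S n)). lra. Qed.

Lemma cover_nonneg A r : cover_val A r -> 0 <= r.
Proof.
  intros [c [_ H]]. specialize (H 0%nat). simpl in H.
  pose proof (pow_le (/2) (length (c 0%nat)) ltac:(lra)). lra.
Qed.

Lemma cover_ex A : cover_val A 2.
Proof.
  exists (fun i => match i with O => nil | S k => repeat false (S k) end).
  split.
  - intros x _. exists 0%nat. unfold N. simpl. intros; lia.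
  - intros n. assert (Hs : sum_f_R0 (fun i => (/2) ^ length (match i with O => nil | S k => repeat false (S k) end)) n = 2 - pw n).
    { induction n. simpl. unfold pw. simpl. lra.
      simpl. simpl in IHn. rewrite IHn. rewrite repeat_length. rewrite pw_S. unfold pw. simpl. lra. }
    rewrite Hs. pose proof (pw_pos n). lra.
Qed.

Lemma mu_spec A : is_inf (cover_val A) (mu A).
Proof.
  unfold mu. apply epsilon_spec.
  set (E := fun v => cover_val A (- v)).
  assert (Hb : bound E).
  { exists 0. intros v Hv. apply cover_nonneg in Hv. lra. }
  assert (He : exists v, E v).
  { exists (-2). unfold E. replace (- -2) with 2 by lra. apply cover_ex. }
  destruct (completeness E Hb He) as [m [Hm1 Hm2]].
  exists (- m). split.
  - intros r Hr. assert (E (- r)) by (unfold E; rewrite Ropp_involutive; exact Hr).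
    specialize (Hm1 _ H). lra.
  - intros m' Hm'. assert (is_upper_bound E (- m')).
    { intros v Hv. specialize (Hm' _ Hv). lra. }
    specialize (Hm2 _ H). lra.
Qed.

Lemma mu_le A r : cover_val A r -> mu A <= r.
Proof. intros H. apply (proj1 (mu_spec A)). exact H. Qed.
Lemma mu_ge A m : (forall r, cover_val A r -> m <= r) -> m <= mu A.
Proof. intros H. apply (proj2 (mu_spec A)). exact H. Qed.
Lemma mu_nonneg A : 0 <= mu A.
Proof. apply mu_ge. apply cover_nonneg. Qed.
Lemma mu_mono (A B : cset) : (forall x, A x -> B x) -> mu A <= mu B.
Proof.
  intros H. apply mu_ge. intros r [c [Hc Hs]]. apply mu_le. exists c. split; auto.
Qed.
Lemma mu_eps A b : (forall eps, 0 < eps -> mu A <= b + eps) -> mu A <= b.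
Proof.
  intros H. destruct (Rle_dec (mu A) b) as [h|h]; auto.
  specialize (H ((mu A - b)/2) ltac:(lra)). lra.
Qed.
Lemma mu_approx A eps : 0 < eps -> exists r, cover_val A r /\ r <= mu A + eps.
Proof.
  intros He. apply NNPP. intros Hn.
  assert (mu A + eps <= mu A).
  { apply mu_ge. intros r Hr. destruct (Rle_dec r (mu A + eps)) as [h|h].
    - exfalso. apply Hn. exists r; auto.
    - lra. }
  lra.
Qed.

Definition ilv (c1 c2 : nat -> list bool) (k : nat) : list bool :=
  if Nat.even k then c1 (Nat.div2 k) else c2 (Nat.div2 k).

Lemma ilv_sum c1 c2 n :
  sum_f_R0 (fun i => (/2) ^ length (ilv c1 c2 i)) (S (2 * n)) =
  sum_f_R0 (fun i => (/2) ^ length (c1 i)) n + sum_f_R0 (fun i => (/2) ^ length (c2 i)) n.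
Proof.
  induction n.
  - simpl. unfold ilv. simpl. lra.
  - replace (S (2 * S n)) with (S (S (S (2 * n)))) by lia.
    change (sum_f_R0 (fun i => (/2) ^ length (ilv c1 c2 i)) (S (2 * n)) +
      (/2) ^ length (ilv c1 c2 (S (S (2 * n)))) + (/2) ^ length (ilv c1 c2 (S (S (S (2 * n))))) =
      sum_f_R0 (fun i => (/2) ^ length (c1 i)) n + (/2) ^ length (c1 (S n)) +
      (sum_f_R0 (fun i => (/2) ^ length (c2 i)) n + (/2) ^ length (c2 (S n)))).
    rewrite IHn.
    unfold ilv.
    replace (S (S (2 * n))) with (2 * S n)%nat by lia.
    rewrite Nat.even_even, Nat.div2_double.
    rewrite Nat.div2_succ_double.
    assert (Nat.even (S (2 * S n)) = false).
    { rewrite Nat.even_succ. rewrite <- Nat.negb_even. rewrite Nat.even_even. reflexivity. }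
    rewrite H. lra.
Qed.

Lemma mu_sub (A B C : cset) : (forall x, A x -> B x \/ C x) -> mu A <= mu B + mu C.
Proof.
  intros H. apply mu_eps. intros eps He.
  destruct (mu_approx B (eps/2) ltac:(lra)) as [r1 [[c1 [Hc1 Hs1]] Hr1]].
  destruct (mu_approx C (eps/2) ltac:(lra)) as [r2 [[c2 [Hc2 Hs2]] Hr2]].
  assert (mu A <= r1 + r2); [|lra].
  apply mu_le. exists (ilv c1 c2). split.
  - intros x Hx. destruct (H x Hx) as [h|h].
    + destruct (Hc1 x h) as [i Hi]. exists (2 * i)%nat. unfold ilv.
      rewrite Nat.even_even, Nat.div2_double. exact Hi.
    + destruct (Hc2 x h) as [i Hi]. exists (S (2 * i))%nat. unfold ilv.
      assert (Nat.even (S (2 * i)) = false).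
      { rewrite Nat.even_succ. rewrite <- Nat.negb_even. rewrite Nat.even_even. reflexivity. }
      rewrite H0, Nat.div2_succ_double. exact Hi.
  - intros n. eapply Rle_trans.
    apply (sum_mono _ n (S (2 * n))). intros; apply pow_le; lra. lia.
    rewrite ilv_sum. specialize (Hs1 n). specialize (Hs2 n). lra.
Qed.

Lemma mu_cyl_le (A : cset) s : (forall x, A x -> N s x) -> mu A <= pw (length s).
Proof.
  intros HA. apply mu_eps. intros eps He. destruct (pw_small eps He) as [K HK].
  assert (mu A <= pw (length s) + pw K); [|lra].
  apply mu_le. exists (fun i => match i with O => s | S k => repeat false (K + S k) end).
  split.
  - intros x Hx. exists 0%nat. apply HA, Hx.
  - intros n. assert (Hs : sum_f_R0 (fun i => (/2) ^ length (match i with O => s | S k => repeat false (K + S k) end)) n = pw (length s) + pw K - pw (K + n)).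
    { induction n. simpl. rewrite Nat.add_0_r. unfold pw. lra.
      simpl. simpl in IHn. rewrite IHn. rewrite repeat_length.
      replace (K + S n)%nat with (S (K + n)) by lia. rewrite pw_S. unfold pw. simpl. lra. }
    rewrite Hs. pose proof (pw_pos (K + n)). lra.
Qed.

Lemma mu_empty (A : cset) : (forall x, ~ A x) -> mu A <= 0.
Proof.
  intros H. apply mu_eps. intros eps He. destruct (pw_small eps He) as [K HK].
  pose proof (mu_cyl_le A (repeat false K) ltac:(intros x Hx; exfalso; exact (H x Hx))).
  rewrite repeat_length in H0. lra.
Qed.


Definition compat (t c : list bool) : Prop :=
  forall k, (k < length t)%nat -> (k < length c)%nat -> nth k t false = nth k c false.

Definition mm (t c : list bool) : R :=
  if excluded_middle_informative (compat t c) then pw (Nat.max (length t) (length c)) else 0.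

Lemma mm_nonneg t c : 0 <= mm t c.
Proof. unfold mm. destruct excluded_middle_informative. left; apply pw_pos. lra. Qed.
Lemma mm_le t c : mm t c <= pw (length c).
Proof. unfold mm. destruct excluded_middle_informative. apply pw_le; lia. left; apply pw_pos. Qed.
Lemma mm_ext t c : compat t c -> (length c <= length t)%nat -> mm t c = pw (length t).
Proof.
  intros H1 H2. unfold mm. destruct excluded_middle_informative; [|contradiction].
  f_equal. lia.
Qed.

Lemma nth_app_last (t : list bool) b k : (k < length t)%nat -> nth k (t ++ b :: nil) false = nth k t false.
Proof. intros. apply app_nth1. auto. Qed.
Lemma nth_app_eq (t : list bool) b : nth (length t) (t ++ b :: nil) false = b.
Proof. rewrite app_nth2 by lia. rewrite Nat.sub_diag. reflexivity. Qed.
Lemma len_app_last (t : list bool) b : length (t ++ b :: nil) = S (length t).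
Proof. rewrite length_app. simpl. lia. Qed.

Lemma mm_split t c : mm t c = mm (t ++ false :: nil) c + mm (t ++ true :: nil) c.
Proof.
  destruct (le_lt_dec (length c) (length t)) as [Hl|Hl].
  - assert (Hc : forall b, compat (t ++ b :: nil) c <-> compat t c).
    { intros b. split; intros H k Hk1 Hk2.
      - rewrite <- (nth_app_last t b) by lia. apply H; auto. rewrite len_app_last. lia.
      - rewrite nth_app_last by lia. apply H; lia. }
    unfold mm. rewrite !len_app_last.
    destruct (excluded_middle_informative (compat t c)) as [h|h].
    + destruct excluded_middle_informative as [h0|h0]; [|exfalso; apply h0, Hc, h].
      destruct excluded_middle_informative as [h1|h1]; [|exfalso; apply h1, Hc, h].
      rewrite !Nat.max_l by lia. rewrite pw_S. lra.
    + destruct excluded_middle_informative as [h0|h0]; [exfalso; apply h, (Hc false), h0|].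
      destruct excluded_middle_informative as [h1|h1]; [exfalso; apply h, (Hc true), h1|]. lra.
  - assert (Hc : forall b, compat (t ++ b :: nil) c <-> compat t c /\ nth (length t) c false = b).
    { intros b. split.
      - intros H. split.
        + intros k Hk1 Hk2. rewrite <- (nth_app_last t b) by lia. apply H; auto. rewrite len_app_last. lia.
        + rewrite <- (H (length t)) by (try rewrite len_app_last; lia). apply nth_app_eq.
      - intros [H Hb] k Hk1 Hk2. rewrite len_app_last in Hk1.
        destruct (Nat.eq_dec k (length t)). subst k. rewrite nth_app_eq. auto.
        rewrite nth_app_last by lia. apply H; lia. }
    unfold mm. rewrite !len_app_last. rewrite !Nat.max_r by lia.
    destruct (excluded_middle_informative (compat t c)) as [h|h].
    + destruct (nth (length t) c false) eqn:E.
      * destruct excluded_middle_informative as [h0|h0]; [apply Hc in h0; destruct h0; discriminate|].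
        destruct excluded_middle_informative as [h1|h1]; [|exfalso; apply h1, Hc; auto]. lra.
      * destruct excluded_middle_informative as [h0|h0]; [|exfalso; apply h0, Hc; auto].
        destruct excluded_middle_informative as [h1|h1]; [apply Hc in h1; destruct h1; discriminate|]. lra.
    + destruct excluded_middle_informative as [h0|h0]; [exfalso; apply h, (Hc false), h0|].
      destruct excluded_middle_informative as [h1|h1]; [exfalso; apply h, (Hc true), h1|]. lra.
Qed.

Definition Dn (c : nat -> list bool) (n : nat) (t : list bool) : R :=
  pw (length t) - sum_f_R0 (fun i => mm t (c i)) n.

Lemma Dn_split c n t : Dn c n t = Dn c n (t ++ false :: nil) + Dn c n (t ++ true :: nil).
Proof.
  unfold Dn. rewrite !len_app_last.
  assert (sum_f_R0 (fun i => mm t (c i)) n =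
     sum_f_R0 (fun i => mm (t ++ false :: nil) (c i) + mm (t ++ true :: nil) (c i)) n).
  { apply sum_eq. intros. apply mm_split. }
  rewrite H, sum_plus. rewrite pw_S. lra.
Qed.

Lemma Dn_dec c n n' t : (n <= n')%nat -> Dn c n' t <= Dn c n t.
Proof.
  intros H. unfold Dn. pose proof (sum_mono (fun i => mm t (c i)) n n' (fun i => mm_nonneg _ _) H). lra.
Qed.

Fixpoint path (c : nat -> list bool) (s : list bool) (d : R) (k : nat) : list bool :=
  match k with
  | O => s
  | S k => let p := path c s d k in
      if excluded_middle_informative (forall n, d * pw (S k) <= Dn c n (p ++ false :: nil))
      then p ++ false :: nil else p ++ true :: nil
  end.

Lemma path_len c s d k : length (path c s d k) = (length s + k)%nat.
Proof.
  induction k; simpl. lia. destruct excluded_middle_informative; rewrite len_app_last; lia.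
Qed.

Lemma path_inv c s d : (forall n, d <= Dn c n s) -> forall k n, d * pw k <= Dn c n (path c s d k).
Proof.
  intros H0 k. induction k.
  - intros n. simpl. rewrite pw_0, Rmult_1_r. apply H0.
  - simpl. destruct excluded_middle_informative as [h|h]. exact h.
    apply not_all_ex_not in h. destruct h as [n0 Hn0]. apply Rnot_le_lt in Hn0.
    intros n. apply Rnot_lt_le. intros Hn.
    set (M := Nat.max n n0).
    pose proof (Dn_dec c n0 M (path c s d k ++ false :: nil) ltac:(lia)).
    pose proof (Dn_dec c n M (path c s d k ++ true :: nil) ltac:(lia)).
    pose proof (IHk M). rewrite (Dn_split c M) in H2. rewrite pw_S in *. lra.
Qed.

Lemma path_prefix c s d k k2 i : (i < length (path c s d k))%nat ->
  nth i (path c s d (k + k2)) false = nth i (path c s d k) false.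
Proof.
  intros Hi. induction k2. rewrite Nat.add_0_r. reflexivity.
  rewrite Nat.add_succ_r. simpl. rewrite <- IHk2.
  assert (i < length (path c s d (k + k2)))%nat by (rewrite path_len in *; lia).
  destruct excluded_middle_informative; apply nth_app_last; auto.
Qed.

Lemma path_point c s d k i : (i < length (path c s d k))%nat ->
  nth i (path c s d k) false = nth i (path c s d (S i)) false.
Proof.
  intros Hi. destruct (le_lt_dec k (S i)).
  - replace (S i) with (k + (S i - k))%nat by lia. rewrite path_prefix; auto.
  - replace k with (S i + (k - S i))%nat by lia. rewrite path_prefix. auto.
    rewrite path_len. lia.
Qed.

Lemma cyl_lower s r : cover_val (N s) r -> pw (length s) <= r.
Proof.
  intros [c [Hc Hs]]. apply Rnot_lt_le. intros Hr.
  set (d := pw (length s) - r).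
  assert (H0 : forall n, d <= Dn c n s).
  { intros n. unfold d, Dn. specialize (Hs n).
    assert (sum_f_R0 (fun i => mm s (c i)) n <= sum_f_R0 (fun i => (/ 2) ^ length (c i)) n).
    { apply sum_Rle. intros. apply mm_le. }
    lra. }
  pose proof (path_inv c s d H0) as Hinv.
  set (x := fun i => nth i (path c s d (S i)) false).
  assert (Hx : forall k i, (i < length (path c s d k))%nat -> nth i (path c s d k) false = x i).
  { intros. apply path_point. auto. }
  assert (HxN : N s x).
  { intros i Hi. rewrite <- (Hx 0%nat) by (simpl; auto). reflexivity. }
  destruct (Hc x HxN) as [i0 Hi0].
  set (t := path c s d (length (c i0))).
  assert (Hcomp : compat t (c i0)).
  { intros k Hk1 Hk2. unfold t. rewrite Hx by auto. apply Hi0. auto. }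
  assert (Hlen : (length (c i0) <= length t)%nat) by (unfold t; rewrite path_len; lia).
  pose proof (mm_ext _ _ Hcomp Hlen).
  pose proof (Hinv (length (c i0)) i0). fold t in H1.
  unfold Dn in H1.
  pose proof (sum_ge_term (fun i => mm t (c i)) i0 i0 (fun i => mm_nonneg _ _) (le_n _)).
  simpl in H2. rewrite H in H2.
  assert (0 < d * pw (length (c i0))). { apply Rmult_lt_0_compat. unfold d; lra. apply pw_pos. }
  lra.
Qed.

Lemma mu_cyl_ge s : pw (length s) <= mu (N s).
Proof. apply mu_ge. apply cyl_lower. Qed.


Definition P (m : nat) : nat := (m * m + m)%nat.
Definition Q (m : nat) : nat := (m * m + 2 * m + 1)%nat.
Definition nondec (p : nat) : Prop := forall m, p <> P m.
Definition hh (m : nat) : nat := fst (of_nat m).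

Lemma P_lt m m' : (m < m')%nat -> (P m < P m')%nat.
Proof. unfold P. intros. nia. Qed.
Lemma Q_lt m m' : (m < m')%nat -> (Q m < Q m')%nat.
Proof. unfold Q. intros. nia. Qed.
Lemma PQ m : (P m < Q m)%nat. Proof. unfold P, Q. lia. Qed.
Lemma QP m : (Q m < P (S m))%nat. Proof. unfold P, Q. nia. Qed.
Lemma P_ge m : (m <= P m)%nat. Proof. unfold P. nia. Qed.
Lemma Q_ge m : (m <= Q m)%nat. Proof. unfold Q. nia. Qed.
Lemma P_le m m' : (m <= m')%nat -> (P m <= P m')%nat.
Proof. intros H. destruct (Nat.eq_dec m m'). subst; lia. apply Nat.lt_le_incl, P_lt. lia. Qed.
Lemma Q_inj m m' : Q m = Q m' -> m = m'.
Proof. intros H. destruct (lt_eq_lt_dec m m') as [[h|h]|h]; auto;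
  [apply Q_lt in h|apply Q_lt in h]; lia. Qed.

Lemma nondec_between m p : (P m < p < P (S m))%nat -> nondec p.
Proof.
  intros [H1 H2] m' E. subst p. destruct (le_lt_dec m' m).
  - pose proof (P_le _ _ l). lia.
  - pose proof (P_le (S m) m' ltac:(lia)). lia.
Qed.
Lemma nondec_Q m : nondec (Q m).
Proof. apply (nondec_between m). pose proof (PQ m). pose proof (QP m). lia. Qed.

Lemma Q_SP m : (Q (S m) = P (S m) + S m + 1)%nat.
Proof. unfold P, Q. nia. Qed.

Definition isdec (p : nat) : bool := Nat.eqb (P (Nat.sqrt p)) p.
Lemma sqrt_P m : Nat.sqrt (P m) = m.
Proof. apply Nat.sqrt_unique. unfold P. nia. Qed.
Lemma isdec_P m : isdec (P m) = true.
Proof. unfold isdec. rewrite sqrt_P. apply Nat.eqb_refl. Qed.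
Lemma isdec_false p : isdec p = false -> nondec p.
Proof. intros H m E. subst. rewrite isdec_P in H. discriminate. Qed.

Definition Zs (y : cantor) : Prop := forall p, nondec p -> y p = false.
Definition Gad (y : cantor) : Prop := exists m,
  (forall p, (p < Q m)%nat -> nondec p -> y p = false) /\ y (P m) = true /\ y (Q m) = true /\
  (forall k, (k < hh m)%nat -> y (Q m + 1 + k)%nat = false).
Definition KK (y : cantor) : Prop := Zs y \/ Gad y.
Definition UU : cset := fun y => ~ KK y.
Definition CC : cset := fun y => ~ KK y \/ Zs y.

Lemma least_ex (Pr : nat -> Prop) : (exists n, Pr n) -> exists n, Pr n /\ forall n', (n' < n)%nat -> ~ Pr n'.
Proof.
  intros [n Hn]. revert Hn. induction n as [n IH] using lt_wf_ind. intros Hn.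
  destruct (classic (exists n', (n' < n)%nat /\ Pr n')) as [[n' [h1 h2]]|h].
  - apply (IH n' h1 h2).
  - exists n. split; auto. intros n' h1 h2. apply h. eauto.
Qed.

Lemma Gad_notZ y : Gad y -> ~ Zs y.
Proof. intros [m [_ [_ [H _]]]] HZ. rewrite HZ in H. discriminate. apply nondec_Q. Qed.

Lemma CC_closed : is_closed CC.
Proof.
  intros y Hy. unfold ccompl, CC in Hy.
  assert (HG : Gad y).
  { destruct (classic (KK y)) as [h|h]; [|tauto]. destruct h; tauto. }
  destruct HG as [m [H1 [H2 [H3 H4]]]].
  exists (Q m + 1 + hh m)%nat. intros y' Hy'. rewrite N_restr in Hy'.
  assert (HG' : Gad y').
  { exists m. split; [|split; [|split]].
    - intros p Hp Hn. rewrite Hy' by lia. auto.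
    - rewrite Hy'. auto. pose proof (PQ m). lia.
    - rewrite Hy' by lia. auto.
    - intros k Hk. rewrite Hy' by lia. auto. }
  unfold ccompl, CC. intros [h|h]. apply h. right; auto. apply (Gad_notZ y' HG' h).
Qed.

Lemma UU_open : is_open UU.
Proof.
  intros y Hy. unfold UU, KK in Hy.
  assert (HnZ : ~ Zs y) by tauto. assert (HnG : ~ Gad y) by tauto.
  assert (exists p, nondec p /\ y p = true).
  { apply NNPP. intros h. apply HnZ. intros p Hp. destruct (y p) eqn:E; auto.
    exfalso. apply h. eauto. }
  destruct (least_ex _ H) as [p [[Hp Hyp] Hleast]].
  assert (Hlow : forall p', (p' < p)%nat -> nondec p' -> y p' = false).
  { intros p' h1 h2. destruct (y p') eqn:E; auto. exfalso. apply (Hleast p' h1). auto. }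
  destruct (classic (exists m, p = Q m /\ y (P m) = true)) as [[m [Ep Em]]|Hno].
  - subst p.
    assert (exists k, (k < hh m)%nat /\ y (Q m + 1 + k)%nat = true).
    { apply NNPP. intros h. apply HnG. exists m. split; [exact Hlow|split; [auto|split; [auto|]]].
      intros k Hk. destruct (y (Q m + 1 + k)%nat) eqn:E; auto. exfalso. apply h. eauto. }
    destruct H0 as [k [Hk Hyk]].
    exists (Q m + 2 + k)%nat. intros y' Hy'. rewrite N_restr in Hy'.
    intros [HZ|[m' [G1 [G2 [G3 G4]]]]].
    + assert (y' (Q m) = true) by (rewrite Hy'; auto; lia).
      rewrite HZ in H0. discriminate. apply nondec_Q.
    + assert (Q m' = Q m).
      { destruct (lt_eq_lt_dec (Q m') (Q m)) as [[h|h]|h]; auto.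
        - rewrite Hy' in G3 by lia. rewrite Hlow in G3 by (auto; apply nondec_Q). discriminate.
        - assert (y' (Q m) = y (Q m)) by (apply Hy'; lia).
          rewrite G1 in H0 by (auto; apply nondec_Q). congruence. }
      apply Q_inj in H0. subst m'. specialize (G4 k Hk). rewrite Hy' in G4 by lia. congruence.
  - exists (S p). intros y' Hy'. rewrite N_restr in Hy'.
    intros [HZ|[m' [G1 [G2 [G3 G4]]]]].
    + assert (Hq : y' p = true) by (rewrite Hy'; auto; lia).
      rewrite HZ in Hq. discriminate. auto.
    + assert (Q m' = p).
      { destruct (lt_eq_lt_dec (Q m') p) as [[h|h]|h]; auto.
        - rewrite Hy' in G3 by lia. rewrite Hlow in G3 by (auto; apply nondec_Q). discriminate.
        - assert (Hq : y' p = y p) by (apply Hy'; lia).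
          rewrite G1 in Hq by auto. congruence. }
      apply Hno. exists m'. split; auto. rewrite <- G2. symmetry. apply Hy'.
      pose proof (PQ m'). lia.
Qed.


Definition upd (w : cantor) (p : nat) (b : bool) : cantor :=
  fun i => if Nat.eqb i p then b else w i.

Lemma mu_diff w n k :
  mu (fun y => N (restr w n) y /\ ~ N (restr w (n + k)) y) <= pw n - pw (n + k).
Proof.
  revert n. induction k; intros n.
  - rewrite Nat.add_0_r. pose proof (mu_empty (fun y => N (restr w n) y /\ ~ N (restr w n) y)
      ltac:(intros x [h1 h2]; tauto)). lra.
  - eapply Rle_trans.
    apply (mu_sub _ (N (restr (upd w n (negb (w n))) (S n)))
                   (fun y => N (restr w (S n)) y /\ ~ N (restr w (S n + k)) y)).
    + intros y [H1 H2]. rewrite N_restr in H1. rewrite N_restr in H2.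
      destruct (Bool.bool_dec (y n) (w n)) as [e|e].
      * right. rewrite !N_restr. split.
        -- intros i Hi. destruct (Nat.eq_dec i n). subst; auto. apply H1. lia.
        -- intros H. apply H2. intros i Hi. apply H. lia.
      * left. rewrite N_restr. intros i Hi. unfold upd.
        destruct (Nat.eqb_spec i n). subst. destruct (y n), (w n); simpl; congruence.
        apply H1. lia.
    + pose proof (mu_cyl_le (N (restr (upd w n (negb (w n))) (S n))) _ (fun x h => h)).
      rewrite restr_length in H. specialize (IHk (S n)).
      replace (pw (S n + k)) with (pw (n + S k)) in IHk by (f_equal; lia).
      rewrite pw_S in *. lra.
Qed.

Lemma Z_bound d : forall k w,
  mu (fun y => Zs y /\ N (restr w (P k)) y) <= 2 ^ d * pw (P (k + d)).
Proof.
  induction d; intros k w.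
  - rewrite Nat.add_0_r. simpl. rewrite Rmult_1_l.
    pose proof (mu_cyl_le (fun y => Zs y /\ N (restr w (P k)) y) (restr w (P k)) ltac:(intros x [_ h]; exact h)).
    rewrite restr_length in H. exact H.
  - set (wb := fun (b : bool) i => if Nat.ltb i (P k) then w i else if Nat.eqb i (P k) then b else false).
    eapply Rle_trans.
    apply (mu_sub _ (fun y => Zs y /\ N (restr (wb false) (P (S k))) y)
                    (fun y => Zs y /\ N (restr (wb true) (P (S k))) y)).
    + intros y [HZ Hy]. rewrite N_restr in Hy.
      assert (Hb : forall i, (i < P (S k))%nat -> y i = wb (y (P k)) i).
      { intros i Hi. unfold wb. destruct (Nat.ltb_spec i (P k)). auto.
        destruct (Nat.eqb_spec i (P k)). subst; auto. apply HZ. apply (nondec_between k). lia. }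
      destruct (y (P k)) eqn:E; [right|left]; split; auto; rewrite N_restr; auto.
    + pose proof (IHd (S k) (wb false)). pose proof (IHd (S k) (wb true)).
      replace (S k + d)%nat with (k + S d)%nat in * by lia. simpl. lra.
Qed.

Lemma Z_null : mu Zs <= 0.
Proof.
  apply mu_eps. intros eps He. destruct (pw_small eps He) as [d Hd].
  pose proof (Z_bound d 0 (fun _ => false)).
  assert (mu Zs <= mu (fun y => Zs y /\ N (restr (fun _ => false) (P 0)) y)).
  { apply mu_mono. intros x h. split; auto. unfold P. simpl. unfold restr. simpl. intros i Hi. simpl in Hi. lia. }
  simpl (0 + d)%nat in H.
  assert (2 ^ d * pw (P d) <= pw d).
  { assert (E: 2^d * pw d = 1).
    { unfold pw. rewrite <- Rpow_mult_distr. replace (2 * /2) with 1 by field. apply pow1. }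
    unfold P. rewrite pw_add.
    replace (2^d * (pw (d*d) * pw d)) with (pw (d*d) * (2^d * pw d)) by ring.
    rewrite E, Rmult_1_r. apply pw_le. nia. }
  lra.
Qed.

Lemma UC_eq s : mu (cinter CC (N s)) = mu (cinter UU (N s)).
Proof.
  apply Rle_antisym.
  - eapply Rle_trans. apply (mu_sub _ (cinter UU (N s)) Zs).
    + intros y [[h|h] h2]. left; split; auto. right; auto.
    + pose proof Z_null. pose proof (mu_nonneg Zs). lra.
  - apply mu_mono. intros y [h1 h2]. split; auto. left; auto.
Qed.


Definition gw (z : cantor) (m : nat) : cantor :=
  fun i => if Nat.ltb i (Q m) then z i else if Nat.eqb i (Q m) then true else false.

Lemma block_ex n : (0 < n)%nat -> exists m, (P m < n <= P (S m))%nat.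
Proof.
  induction n; intros H. lia.
  destruct (Nat.eq_dec n 0). subst. exists 0%nat. unfold P. simpl. lia.
  destruct IHn as [m Hm]. lia.
  destruct (le_lt_dec (S n) (P (S m))). exists m. lia.
  exists (S m). split. lia. pose proof (P_lt (S m) (S (S m)) ltac:(lia)). lia.
Qed.

Lemma cover_K z m n y : Zs z -> (P m < n <= P (S m))%nat -> KK y -> N (restr z n) y ->
  (z (P m) = true /\ (n <= Q m)%nat /\ N (restr (gw z m) (Q m + 1 + hh m)) y) \/
  N (restr (upd z (P (S m)) false) (Q (S m))) y \/ N (restr (upd z (P (S m)) true) (Q (S m))) y.
Proof.
  intros Hz Hn HK Hy. rewrite N_restr in Hy.
  pose proof (PQ m) as H1. pose proof (QP m) as H2. pose proof (PQ (S m)) as H3. pose proof (QP (S m)) as H4.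
  assert (Hnd : forall i, (n <= i < Q (S m))%nat -> i <> P (S m) -> nondec i).
  { intros i Hi Hne. destruct (Nat.eq_dec i (P (S m))). contradiction.
    destruct (le_lt_dec i (P (S m))). apply (nondec_between m). lia.
    apply (nondec_between (S m)). lia. }
  assert (HA : (forall i, (i < Q (S m))%nat -> nondec i -> y i = false) ->
     N (restr (upd z (P (S m)) false) (Q (S m))) y \/ N (restr (upd z (P (S m)) true) (Q (S m))) y).
  { intros HZ.
    assert (Hb : forall i, (i < Q (S m))%nat -> y i = upd z (P (S m)) (y (P (S m))) i).
    { intros i Hi. unfold upd. destruct (Nat.eqb_spec i (P (S m))). subst; auto.
      destruct (le_lt_dec n i). rewrite HZ, Hz; auto; apply Hnd; lia. apply Hy; lia. }
    destruct (y (P (S m))) eqn:E; [right|left]; rewrite N_restr; auto. }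
  destruct HK as [HZ|[m' [G1 [G2 [G3 G4]]]]].
  - right. apply HA. intros; apply HZ; auto.
  - assert (Hqn : (n <= Q m')%nat).
    { destruct (le_lt_dec n (Q m')); auto. rewrite Hy in G3 by lia. rewrite Hz in G3. discriminate. apply nondec_Q. }
    destruct (lt_eq_lt_dec m' m) as [[h|h]|h].
    + exfalso. pose proof (QP m'). pose proof (P_le (S m') m ltac:(lia)). lia.
    + subst m'. left. split; [|split]; auto.
      * rewrite <- Hy by lia. auto.
      * rewrite N_restr. intros i Hi. unfold gw.
        destruct (Nat.ltb_spec i (Q m)).
        -- destruct (le_lt_dec n i). rewrite G1, Hz; auto; apply (nondec_between m); lia. apply Hy; lia.
        -- destruct (Nat.eqb_spec i (Q m)). subst; auto.
           replace i with (Q m + 1 + (i - Q m - 1))%nat by lia. apply G4. lia.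
    + right. apply HA. intros i Hi Hnd'. apply G1; auto. assert (Q (S m) <= Q m')%nat by (destruct (Nat.eq_dec (S m) m'); [subst; lia| pose proof (Q_lt (S m) m' ltac:(lia)); lia]). lia.
Qed.

Lemma ratio_close a p eps : 0 < p -> p * (1 - eps) < a -> a <= p -> Rabs (a / p - 1) < eps.
Proof.
  intros Hp H1 H2. set (r := a / p). assert (a = r * p) by (unfold r; field; lra).
  rewrite H in H1, H2. assert (1 - eps < r) by nra. assert (r <= 1) by nra.
  unfold Rabs. destruct Rcase_abs; lra.
Qed.

Lemma D1 z : Zs z -> (forall i0, exists M, forall m, (M <= m)%nat -> z (P m) = true -> (i0 < hh m)%nat) ->
  Phi UU z.
Proof.
  intros Hz Hyp eps He.
  destruct (pw_small (eps/2) ltac:(lra)) as [i0 Hi0].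
  destruct (Hyp i0) as [M HM].
  destruct (pw_small (eps/2) ltac:(lra)) as [K0 HK0].
  exists (S (P (Nat.max M K0))). intros n Hn. unfold R_dist.
  destruct (block_ex n ltac:(lia)) as [m Hm].
  assert (HmM : (Nat.max M K0 <= m)%nat).
  { destruct (le_lt_dec (Nat.max M K0) m); auto. pose proof (P_le (S m) (Nat.max M K0) ltac:(lia)). lia. }
  pose proof (Nat.le_max_l M K0). pose proof (Nat.le_max_r M K0).
  set (t := restr z n).
  assert (Hup : mu (cinter UU (N t)) <= pw n).
  { pose proof (mu_cyl_le (cinter UU (N t)) t ltac:(intros x [_ h]; exact h)) as Hc. unfold t in Hc.
    rewrite restr_length in Hc. exact Hc. }
  assert (Hlow : pw n <= mu (cinter UU (N t)) + mu (cinter KK (N t))).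
  { pose proof (mu_cyl_ge t) as Hc. unfold t in Hc at 1. rewrite restr_length in Hc.
    eapply Rle_trans. exact Hc. apply mu_sub. intros y Hy. destruct (classic (KK y)).
    right; split; auto. left; split; auto. }
  set (G := fun y => z (P m) = true /\ (n <= Q m)%nat /\ N (restr (gw z m) (Q m + 1 + hh m)) y).
  set (A0 := N (restr (upd z (P (S m)) false) (Q (S m)))).
  set (A1 := N (restr (upd z (P (S m)) true) (Q (S m)))).
  assert (HK : mu (cinter KK (N t)) <= mu G + (mu A0 + mu A1)).
  { eapply Rle_trans. apply (mu_sub _ G (fun y => A0 y \/ A1 y)).
    intros y [h1 h2]. destruct (cover_K z m n y Hz Hm h1 h2) as [h|[h|h]]; [left|right;left|right;right]; auto.
    pose proof (mu_sub (fun y => A0 y \/ A1 y) A0 A1 (fun x h => h)). lra. }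
  assert (HA : mu A0 + mu A1 <= pw n * pw K0).
  { pose proof (mu_cyl_le A0 _ (fun x h => h)) as Ha0. pose proof (mu_cyl_le A1 _ (fun x h => h)) as Ha1.
    rewrite restr_length in Ha0, Ha1. rewrite Q_SP in Ha0, Ha1.
    assert (Hq : pw (P (S m) + S m + 1) <= pw (n + S K0)) by (apply pw_le; lia).
    rewrite (pw_add n (S K0)), (pw_S K0) in Hq. lra. }
  assert (HG : mu G <= pw n * pw i0).
  { destruct (classic (z (P m) = true /\ (n <= Q m)%nat)) as [[c1 c2]|c].
    - assert (i0 < hh m)%nat by (apply (HM m); auto; lia).
      eapply Rle_trans. apply (mu_cyl_le G (restr (gw z m) (Q m + 1 + hh m))). intros x [_ [_ h]]; exact h.
      rewrite restr_length. rewrite <- pw_add. apply pw_le. lia.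
    - eapply Rle_trans. apply mu_empty. intros x [h1 [h2 _]]. tauto.
      left. apply Rmult_lt_0_compat; apply pw_pos. }
  assert (pw K0 <= pw K0) by lra. pose proof (pw_pos n).
  assert (pw n * pw i0 < pw n * (eps/2)) by (apply Rmult_lt_compat_l; lra).
  assert (pw n * pw K0 < pw n * (eps/2)) by (apply Rmult_lt_compat_l; lra).
  fold t. change ((/2)^n) with (pw n).
  apply ratio_close; auto. nra.
Qed.

Lemma D2 z : Zs z -> (exists i, forall M, exists m, (M <= m)%nat /\ hh m = i /\ z (P m) = true) ->
  ~ Phi UU z.
Proof.
  intros Hz [i Hi] HP.
  destruct (HP (pw (S i)) (pw_pos _)) as [N0 HN0].
  destruct (Hi N0) as [m [Hm1 [Hm2 Hm3]]].
  set (n := Q m).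
  specialize (HN0 n ltac:(pose proof (Q_ge m); unfold n; lia)). unfold R_dist in HN0.
  assert (Hmu : mu (cinter UU (N (restr z n))) <= pw n - pw (n + S i)).
  { eapply Rle_trans; [|apply (mu_diff (gw z m) n (S i))].
    apply mu_mono. intros y [HU Hy]. rewrite N_restr in Hy.
    assert (Hg : forall j, (j < n)%nat -> gw z m j = z j).
    { intros j Hj. unfold gw. destruct (Nat.ltb_spec j (Q m)); auto. unfold n in Hj; lia. }
    split.
    - rewrite N_restr. intros j Hj. rewrite Hg; auto.
    - intros Hy2. rewrite N_restr in Hy2. apply HU. right. exists m.
      pose proof (PQ m).
      split; [|split; [|split]].
      + intros p Hp Hnd. rewrite Hy by (unfold n; lia). auto.
      + rewrite Hy by (unfold n; lia). auto.
      + rewrite Hy2 by lia. unfold gw. rewrite Nat.ltb_irrefl, Nat.eqb_refl. auto.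
      + intros k Hk. rewrite Hy2 by (unfold n; lia). unfold gw.
        destruct (Nat.ltb_spec (Q m + 1 + k) (Q m)). lia.
        destruct (Nat.eqb_spec (Q m + 1 + k) (Q m)). lia. auto. }
  change ((/2)^n) with (pw n) in HN0.
  rewrite pw_add in Hmu. pose proof (pw_pos n).
  set (a := mu (cinter UU (N (restr z n)))) in *.
  assert (a / pw n <= 1 - pw (S i)).
  { apply (Rmult_le_reg_r (pw n)); auto. unfold Rdiv. rewrite Rmult_assoc, Rinv_l by lra. lra. }
  revert HN0. unfold Rabs. destruct Rcase_abs; intros; lra.
Qed.


Lemma restr_N_eq x y n : N (restr x n) y -> restr y n = restr x n.
Proof. intros H. apply restr_ext. rewrite N_restr in H. auto. Qed.

Lemma Phi_Pi03 A : is_Pi03 (Phi A).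
Proof.
  exists (fun k M x => forall n, (M <= n)%nat ->
    Rabs (mu (cinter A (N (restr x n))) / (/2)^n - 1) <= pw k).
  split.
  - intros k M x Hx. unfold ccompl in Hx. apply not_all_ex_not in Hx. destruct Hx as [n Hn].
    apply imply_to_and in Hn. destruct Hn as [Hn1 Hn2].
    exists n. intros y Hy. unfold ccompl. intros H. apply Hn2.
    rewrite <- (restr_N_eq x y n Hy). apply H. auto.
  - intros x. split.
    + intros H k. destruct (H (pw k) (pw_pos k)) as [M HM]. exists M. intros n Hn.
      left. apply HM. auto.
    + intros H eps He. destruct (pw_small eps He) as [k Hk]. destruct (H k) as [M HM].
      exists M. intros n Hn. unfold R_dist. specialize (HM n Hn). lra.
Qed.


Definition Rr (Fs : nat -> nat -> cset) (i j t : nat) (x : cantor) : Prop :=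
  forall j', (j' <= j)%nat -> ~ exists y, N (restr x t) y /\ Fs i j' y.
Definition acond (Fs : nat -> nat -> cset) (i j t : nat) (x : cantor) : Prop :=
  Rr Fs i j t x /\ forall t', (t' < t)%nat -> ~ Rr Fs i j t' x.
Definition i_of (m : nat) := fst (of_nat m).
Definition j_of (m : nat) := fst (of_nat (snd (of_nat m))).
Definition t_of (m : nat) := snd (of_nat (snd (of_nat m))).
Definition aa (Fs : nat -> nat -> cset) (x : cantor) (m : nat) : bool :=
  if excluded_middle_informative (acond Fs (i_of m) (j_of m) (t_of m) x) then true else false.
Definition ff (Fs : nat -> nat -> cset) (x : cantor) : cantor := fun p => if isdec p then aa Fs x (Nat.sqrt p) else false.

Lemma m_enc m : m = to_nat (i_of m, to_nat (j_of m, t_of m)).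
Proof.
  unfold i_of, j_of, t_of. rewrite <- surjective_pairing, cancel_to_of.
  rewrite <- surjective_pairing, cancel_to_of. reflexivity.
Qed.
Lemma dec_enc i j t : i_of (to_nat (i, to_nat (j, t))) = i /\ j_of (to_nat (i, to_nat (j, t))) = j /\
  t_of (to_nat (i, to_nat (j, t))) = t.
Proof. unfold i_of, j_of, t_of. rewrite cancel_of_to. change (fst (i, to_nat (j, t))) with i. change (snd (i, to_nat (j, t))) with (to_nat (j, t)). rewrite cancel_of_to. auto. Qed.
Lemma t_le m : (t_of m <= m)%nat.
Proof.
  rewrite (m_enc m) at 2. pose proof (to_nat_non_decreasing (i_of m) (to_nat (j_of m, t_of m))).
  pose proof (to_nat_non_decreasing (j_of m) (t_of m)). lia.
Qed.

Lemma Rr_ext (Fs : nat -> nat -> cset) i j t x y : restr x t = restr y t -> (Rr Fs i j t x <-> Rr Fs i j t y).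
Proof. intros H. unfold Rr. rewrite H. tauto. Qed.
Lemma acond_ext (Fs : nat -> nat -> cset) i j t x y : (forall k, (k < t)%nat -> x k = y k) -> (acond Fs i j t x <-> acond Fs i j t y).
Proof.
  intros H. assert (He : forall t', (t' <= t)%nat -> restr x t' = restr y t').
  { intros t' Ht. apply restr_ext. intros; apply H; lia. }
  unfold acond. split; intros [h1 h2]; split.
  - rewrite <- Rr_ext; eauto.
  - intros t' Ht hc. apply (h2 t' Ht). rewrite Rr_ext; eauto. apply He; lia.
  - rewrite Rr_ext; eauto.
  - intros t' Ht hc. apply (h2 t' Ht). rewrite <- Rr_ext; eauto. apply He; lia.
Qed.

Lemma ff_Z (Fs : nat -> nat -> cset) x : Zs (ff Fs x).
Proof.
  intros p Hp. unfold ff. destruct (isdec p) eqn:E; auto.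
  unfold isdec in E. apply Nat.eqb_eq in E. exfalso. apply (Hp _ (eq_sym E)).
Qed.
Lemma ff_P (Fs : nat -> nat -> cset) x m : ff Fs x (P m) = aa Fs x m.
Proof. unfold ff. rewrite isdec_P, sqrt_P. reflexivity. Qed.

Lemma ff_cont (Fs : nat -> nat -> cset) : continuous_map (ff Fs).
Proof.
  intros x n. exists n. intros y Hy. rewrite N_restr in *. intros p Hp.
  unfold ff. destruct (isdec p) eqn:E; auto.
  unfold isdec in E. apply Nat.eqb_eq in E.
  set (m0 := Nat.sqrt p) in *.
  unfold aa. pose proof (t_le m0). pose proof (P_ge m0).
  destruct (excluded_middle_informative (acond Fs (i_of m0) (j_of m0) (t_of m0) y)) as [h|h];
  destruct (excluded_middle_informative (acond Fs (i_of m0) (j_of m0) (t_of m0) x)) as [h'|h']; auto.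
  - exfalso. apply h'. rewrite (acond_ext _ _ _ _ x y); auto. intros k Hk. symmetry. apply Hy. lia.
  - exfalso. apply h. rewrite (acond_ext _ _ _ _ x y) in h'; auto. intros k Hk. symmetry. apply Hy. lia.
Qed.

Lemma acond_uniq (Fs : nat -> nat -> cset) i j t t' x : acond Fs i j t x -> acond Fs i j t' x -> t = t'.
Proof.
  intros [h1 h2] [h1' h2']. destruct (lt_eq_lt_dec t t') as [[h|h]|h]; auto.
  exfalso; apply (h2' t h h1). exfalso; apply (h2 t' h h1').
Qed.

Lemma fin_case (Fs : nat -> nat -> cset) i x : (exists j, Fs i j x) -> exists B, forall m, hh m = i -> aa Fs x m = true -> (m <= B)%nat.
Proof.
  intros [j0 Hj0].
  assert (Cl : forall J, exists B, forall j t, (j < J)%nat -> acond Fs i j t x -> (to_nat (i, to_nat (j, t)) <= B)%nat).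
  { induction J.
    - exists 0%nat. intros; lia.
    - destruct IHJ as [B1 HB1].
      destruct (classic (exists t, acond Fs i J t x)) as [[t0 H0]|Hn].
      + exists (Nat.max B1 (to_nat (i, to_nat (J, t0)))). intros j t Hj Ha.
        destruct (Nat.eq_dec j J). subst j. rewrite (acond_uniq _ _ _ _ _ _ Ha H0). lia.
        specialize (HB1 j t ltac:(lia) Ha). lia.
      + exists B1. intros j t Hj Ha. destruct (Nat.eq_dec j J). subst; exfalso; eauto.
        apply HB1; auto; lia. }
  destruct (Cl j0) as [B HB]. exists B. intros m Hm Ha.
  unfold aa in Ha. destruct excluded_middle_informative as [h|h]; [|discriminate].
  rewrite (m_enc m). unfold hh in Hm. fold (i_of m) in Hm. rewrite Hm in *.
  apply HB; auto. destruct (le_lt_dec j0 (j_of m)); auto. exfalso.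
  destruct h as [h _]. apply (h j0 l). exists x. split; auto. rewrite N_restr. auto.
Qed.

Lemma inf_case (Fs : nat -> nat -> cset) i x : (forall j, is_closed (Fs i j)) -> (forall j, ~ Fs i j x) ->
  forall M, exists m, (M <= m)%nat /\ hh m = i /\ aa Fs x m = true.
Proof.
  intros Hcl Hn M.
  assert (Cl : forall J, exists t, forall j', (j' <= J)%nat -> forall y, N (restr x t) y -> ~ Fs i j' y).
  { induction J.
    - destruct (Hcl 0%nat x (Hn 0%nat)) as [t Ht]. exists t. intros j' Hj' y Hy.
      replace j' with 0%nat by lia. apply Ht, Hy.
    - destruct IHJ as [t1 H1]. destruct (Hcl (S J) x (Hn (S J))) as [t2 H2].
      exists (Nat.max t1 t2). intros j' Hj' y Hy. rewrite N_restr in Hy.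
      destruct (Nat.eq_dec j' (S J)).
      + subst. apply H2. rewrite N_restr. intros; apply Hy; lia.
      + apply (H1 j' ltac:(lia)). rewrite N_restr. intros; apply Hy; lia. }
  destruct (Cl M) as [t Ht].
  assert (HR : Rr Fs i M t x).
  { intros j' Hj' [y [h1 h2]]. exact (Ht j' Hj' y h1 h2). }
  destruct (least_ex (fun t => Rr Fs i M t x) (ex_intro _ t HR)) as [t0 [H0 H0']].
  exists (to_nat (i, to_nat (M, t0))). destruct (dec_enc i M t0) as [e1 [e2 e3]].
  split; [|split].
  - pose proof (to_nat_non_decreasing i (to_nat (M, t0))). pose proof (to_nat_non_decreasing M t0). lia.
  - unfold hh. fold (i_of (to_nat (i, to_nat (M, t0)))). auto.
  - unfold aa. rewrite e1, e2, e3. destruct excluded_middle_informative as [h|h]; auto.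
    exfalso. apply h. split; auto.
Qed.



Theorem theorem1p2 :
  exists U C : cset,
    is_open U /\ is_closed C /\
    (forall x, Phi U x <-> Phi C x) /\
    complete_Pi03 (Phi U).
Proof.
  exists UU, CC. split; [exact UU_open|split; [exact CC_closed|split]].
  - intros x. unfold Phi, Un_cv. split; intros H eps He; destruct (H eps He) as [N0 HN];
    exists N0; intros n Hn; specialize (HN n Hn); cbv beta in *; rewrite UC_eq in *; auto.
  - split. apply Phi_Pi03.
    intros Y [Fs [Hcl HY]]. exists (ff Fs). split. apply (ff_cont Fs).
    intros x. split.
    + intros Hx. rewrite HY in Hx. apply D1. apply ff_Z.
      assert (Bd : forall i0, exists B, forall m, (hh m <= i0)%nat -> aa Fs x m = true -> (m <= B)%nat).
      { induction i0.
        - destruct (fin_case Fs 0 x (Hx 0%nat)) as [B HB]. exists B. intros m Hm Ha.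
          apply HB; auto. lia.
        - destruct IHi0 as [B1 HB1]. destruct (fin_case Fs (S i0) x (Hx (S i0))) as [B2 HB2].
          exists (Nat.max B1 B2). intros m Hm Ha. destruct (Nat.eq_dec (hh m) (S i0)).
          + specialize (HB2 m e Ha). lia.
          + specialize (HB1 m ltac:(lia) Ha). lia. }
      intros i0. destruct (Bd i0) as [B HB]. exists (S B). intros m Hm Ha.
      rewrite ff_P in Ha. destruct (le_lt_dec (hh m) i0); auto.
      specialize (HB m l Ha). lia.
    + intros HP. rewrite HY. apply NNPP. intros Hn.
      apply not_all_ex_not in Hn. destruct Hn as [i Hi].
      assert (Hi' : forall j, ~ Fs i j x) by (intros j hj; apply Hi; eauto).
      apply (D2 (ff Fs x) (ff_Z Fs x)); auto.
      exists i. intros M. destruct (inf_case Fs i x (Hcl i) Hi' M) as [m [h1 [h2 h3]]].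
      exists m. rewrite ff_P. auto.
Qed.
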